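(* For a polynomial $p(x,y)=\sum_{i,j\ge0}a_{i,j}x^iy^j$ and an integer $n\ge0$ define $I_n(p)=\sum_{i=0}^{n}\sum_{j=0}^{n-i}(-1)^j\binom{n-i}{j}a_{i,j}$. Then for all integers $n,k\ge 0$, $$I_n\big(((x-1)(y-1))^k\big)=1.$$ *)

(* Defs.v *)
(* Bivariate polynomials over int are represented as
   {poly {poly int}}: the outer variable is x, the inner (coefficient)
   variable is y, so a_{i,j} = (p`_i)`_j is the coefficient of x^i y^j. *)
From mathcomp Require Import all_boot all_algebra.
Set Implicit Arguments. Unset Strict Implicit. Unset Printing Implicit Defensive.
Import GRing.Theory.
Local Open Scope ring_scope.

Definition bicoef (p : {poly {poly int}}) (i j : nat) : int := (p`_i)`_j.

Definition varx : {poly {poly int}} := 'X.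
Definition vary : {poly {poly int}} := ('X)%:P.

Definition In (n : nat) (p : {poly {poly int}}) : int :=
  \sum_(i < n.+1) \sum_(j < (n - i).+1)
     (-1) ^+ j * ('C(n - i, j))%:R * bicoef p i j.

(* Main.v *)
Require Import Defs.
From mathcomp Require Import all_boot all_algebra.
Local Open Scope ring_scope.
Import GRing.Theory.

Definition Jm (m : nat) (r : {poly int}) : int :=
  \sum_(j < m.+1) (-1) ^+ j * ('C(m, j))%:R * r`_j.

Definition Tm (m : nat) (r : {poly int}) : int :=
  \sum_(j < m.+1) (-1) ^+ j * ('C(m.+1, j.+1))%:R * r`_j.

Lemma In_Jm n p : In n p = \sum_(i < n.+1) Jm (n - i) p`_i.
Proof. by []. Qed.

Lemma JmB m a b : Jm m (a - b) = Jm m a - Jm m b.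
Proof.
rewrite /Jm -sumrB; apply: eq_bigr => j _.
by rewrite coefB mulrBr.
Qed.

Lemma Jm0 m : Jm m 0 = 0.
Proof. by rewrite /Jm big1 // => j _; rewrite coef0 mulr0. Qed.

Lemma Jm1 m : Jm m 1 = 1.
Proof.
rewrite /Jm big_ord_recl /= coef1 /= bin0 expr0 !mul1r.
by rewrite big1 ?addr0 // => j _; rewrite coef1 /= mulr0.
Qed.

Lemma JmS m r : Jm m (('X - 1) * r) = - Tm m r.
Proof.
rewrite mulrBl mul1r JmB /Jm big_ord_recl /= coefXM /=.
have M0 : forall a : int, a * 0 = 0 by move=> a; rewrite mulr0.
rewrite M0 add0r.
have -> : \sum_(i < m) (-1) ^+ bump 0 i * ('C(m, bump 0 i))%:R * ('X * r)`_(bump 0 i)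
  = \sum_(j < m.+1) (-1) ^+ j.+1 * ('C(m, j.+1))%:R * r`_j.
  rewrite [RHS]big_ord_recr /= bin_small // mulr0n mulr0 mul0r addr0.
  by apply: eq_bigr => j _; rewrite coefXM.
rewrite /Tm -sumrB -sumrN; apply: eq_bigr => j _.
rewrite exprS binS natrD.
by rewrite mulN1r !mulNr mulrDr mulrDl opprD.
Qed.


Lemma key m r : Jm m (('X - 1) * r) - Jm m.+1 (('X - 1) * r) = Jm m.+1 r.
Proof.
rewrite !JmS opprK addrC /Tm /Jm.
have -> : \sum_(j < m.+1) (-1) ^+ j * ('C(m.+1, j.+1))%:R * r`_j
  = \sum_(j < m.+2) (-1) ^+ j * ('C(m.+1, j.+1))%:R * r`_j.
  by rewrite [RHS]big_ord_recr /= bin_small // mulr0n mulr0 mul0r addr0.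
rewrite -sumrB; apply: eq_bigr => j _.
by rewrite [in LHS]binS natrD mulrDr mulrDl addrAC subrr add0r.
Qed.

Lemma key0 r : - Jm 0 (('X - 1) * r) = Jm 0 r.
Proof.
rewrite JmS opprK /Tm /Jm !big_ord_recl !big_ord0 /=.
by [].
Qed.

Lemma In_mulq n p : In n (((varx - 1) * (vary - 1)) * p) = In n p.
Proof.
rewrite !In_Jm /vary -polyCB -mulrA.
set s := ('X - 1 : {poly int}).
have coefq i : ((varx - 1) * (s%:P * p))`_i =
    (if i == 0%N then 0 else s * p`_i.-1) - s * p`_i.
  by rewrite mulrBl mul1r coefB /varx coefXM !coefCM; case: (i == 0%N).
under eq_bigr do rewrite coefq JmB.
rewrite sumrB big_ord_recl /= Jm0 add0r.
rewrite [X in _ - X]big_ord_recr /= subnn.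
rewrite opprD addrA.
rewrite [in RHS]big_ord_recr /= subnn.
congr (_ + _); last exact: key0.
rewrite -sumrB; apply: eq_bigr => i _.
rewrite /bump /= add1n add0n.
have -> : (n - i = (n - i.+1).+1)%N by rewrite subnS prednK // subn_gt0.
exact: key.
Qed.

Theorem lemma3p3 (n k : nat) :
  In n (((varx - 1) * (vary - 1)) ^+ k) = 1.
Proof.
elim: k => [|k IH].
  rewrite expr0 In_Jm big_ord_recl /= subn0 coef1 /= Jm1.
  by rewrite big1 ?addr0 // => i _; rewrite coef1 /= Jm0.
by rewrite exprS In_mulq.
Qed.
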